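(* Let $\mathcal{N}(\mu^\star,\Sigma)$ and $\mathcal{N}(\mu,\Sigma)$ be two $d$-dimensional Gaussian distributions with the same covariance $\Sigma$, such that $e_i^T\Sigma e_i\le Q$ and $|\mu^\star_i|=1$ for all $i\in[d]$. Then there is an absolute constant $c\in(0,1]$ such that for every $i\in[d]$, \[\Big|\Pr_{x\sim\mathcal{N}(\mu^\star,\Sigma)}[-1\le x_i\le1]-\Pr_{x\sim\mathcal{N}(\mu,\Sigma)}[-1\le x_i\le 1]\Big|\ge c\cdot\frac{\min(1,(1-|\mu_i|)^2)}{Q^4}.\]
   Context: $e_i$ is the $i$-th standard basis vector; $\mathcal{N}(\mu,\Sigma)$ is the Gaussian with mean $\mu$ and covariance $\Sigma$. *)

(* Defs.v *)
From HB Require Import structures.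
From mathcomp Require Import all_boot all_order all_algebra.
From mathcomp Require Import all_classical all_reals all_analysis.
Set Implicit Arguments. Unset Strict Implicit. Unset Printing Implicit Defensive.
Import Order.TTheory GRing.Theory Num.Theory.
Local Open Scope classical_set_scope.
Local Open Scope ring_scope.

Definition quad_form {R : realType} (d : nat) (S : 'M[R]_d) (a : 'cV[R]_d) : R :=
  (a^T *m S *m a) 0 0.

Definition pos_def {R : realType} (d : nat) (S : 'M[R]_d) : Prop :=
  S^T = S /\ forall a : 'cV[R]_d, a != 0 -> 0 < quad_form S a.

(* X = (X_0,...,X_{d-1}), random variables on the probability space (T,P),
   is a Gaussian random vector with law N(mu, S): every coordinate is
   measurable and every nonzero linear combination a^T X is (univariate)
   normal with mean a^T mu and variance a^T S a.  (standard definition) *)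
Definition gaussian_vector {R : realType} (d : nat)
    (dT : measure_display) (T : measurableType dT) (P : probability T R)
    (X : 'I_d -> T -> R) (mu : 'cV[R]_d) (S : 'M[R]_d) : Prop :=
  (forall i, measurable_fun [set: T] (X i)) /\
  forall a : 'cV[R]_d, a != 0 ->
    forall A : set R, measurable A ->
      P ((fun t => \sum_(j < d) a j 0 * X j t) @^-1` A) =
      normal_prob (\sum_(j < d) a j 0 * mu j 0) (Num.sqrt (quad_form S a)) A.

Definition prob_box {R : realType} (d : nat)
    (dT : measure_display) (T : measurableType dT) (P : probability T R)
    (X : 'I_d -> T -> R) (i : 'I_d) : R :=
  fine (P (X i @^-1` `[-1, 1])).

(* Main.v *)
Require Import Defs.
From HB Require Import structures.
From mathcomp Require Import all_boot all_order all_algebra.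
From mathcomp Require Import all_classical all_reals all_analysis.
From mathcomp Require Import ring lra.
Import Order.TTheory GRing.Theory Num.Theory.
Import numFieldTopology.Exports numFieldNormedType.Exports.
Local Open Scope classical_set_scope.
Local Open Scope ring_scope.
Definition phi {R : realType} (s x : R) : R := normal_pdf 0 s x.
Definition II {R : realType} (s u v : R) : R :=
  (\int[lebesgue_measure]_(x in `[u, v]) phi s x)%R.

Lemma phi_cont {R : realType} (s : R) : s != 0 -> continuous (fun x : R => phi s x).
Proof. by move=> s0; exact: continuous_normal_pdf. Qed.

Lemma int_phi {R : realType} (s : R) (A : set R) : measurable A ->
  lebesgue_measure.-integrable A (EFin \o phi s).
Proof.
move=> mA; apply: (integrableS measurableT) => //.
exact: integrable_normal_pdf.
Qed.

Lemma II_split {R : realType} (s u v w : R) : u <= v -> v <= w ->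
  II s u w = II s u v + II s v w.
Proof.
move=> uv vw.
have := @Rintegral_itvB R (phi s) (BLeft u) (BRight w) v (@int_phi R s _ (measurable_itv _)).
rewrite !bnd_simp => /(_ uv vw) H.
rewrite /II -(@Rintegral_itv_obnd_cbnd R v (BRight w)); last exact: int_phi.
rewrite -H; set a := Rintegral _ _ _; set b := Rintegral _ _ _.
by rewrite addrCA subrr addr0.
Qed.

Lemma II_shift {R : realType} (s c u v : R) : s != 0 -> u <= v ->
  II s (u + c) (v + c) = (\int[lebesgue_measure]_(x in `[u, v]) phi s (x + c))%R.
Proof.
move=> s0 uv.
have D1 : (shift c : R -> R)^`()%classic = cst 1.
  by apply/funext => x; rewrite derive1E deriveD// derive_id derive_cst addr0.
have cF : continuous (shift c : R -> R).
  by move=> x; apply: continuousD => //; exact: cvg_cst.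
rewrite /II /Rintegral.
have := @integration_by_substitution_increasing R (shift c) (phi s) u v uv.
rewrite /= => ->.
- congr fine; apply: eq_integral => x _ /=.
  by rewrite D1 /= mulr1.
- by move=> x y _ _ xy; rewrite /shift ltrD2r.
- by rewrite D1 => ? _; exact: cvg_cst.
- by rewrite D1; exact: is_cvg_cst.
- by rewrite D1; exact: is_cvg_cst.
- split.
  + by move=> x _; apply: derivableD => //; exact: derivable_id.
  + by apply: cvg_at_right_filter; apply: cF.
  + by apply: cvg_at_left_filter; apply: cF.
- by apply: continuous_subspaceT => x; exact: phi_cont.
Qed.

Lemma phi_even {R : realType} (s x : R) : s != 0 -> phi s (- x) = phi s x.
Proof. by move=> s0; rewrite /phi normal_pdfE // /normal_fun !subr0 sqrrN. Qed.

Lemma II_refl {R : realType} (s u v : R) : s != 0 -> u <= v ->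
  II s (- v) (- u) = II s u v.
Proof.
move=> s0 uv; rewrite /II /Rintegral integration_by_substitution_oppr //.
- by congr fine; apply: eq_integral => x _ /=; rewrite phi_even.
- by apply: continuous_subspaceT => x; exact: phi_cont.
Qed.

Lemma Rsplit {R : realType} (f : R -> R) (u v w : R) : continuous f -> u <= v -> v <= w ->
  (\int[lebesgue_measure]_(x in `[u, w]) f x =
  \int[lebesgue_measure]_(x in `[u, v]) f x + \int[lebesgue_measure]_(x in `[v, w]) f x)%R.
Proof.
move=> cf uv vw.
have intf : forall a b : R, lebesgue_measure.-integrable `[a, b] (EFin \o f).
  move=> a b; apply: continuous_compact_integrable; first exact: segment_compact.
  by apply: continuous_subspaceT.
have := @Rintegral_itvB R f (BLeft u) (BRight w) v (intf u w).
rewrite !bnd_simp => /(_ uv vw) H.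
rewrite -(@Rintegral_itv_obnd_cbnd R v (BRight w)); last first.
  apply: (integrableS _ _ _ (intf v w)) => //; apply: subset_itvr; by rewrite bnd_simp.
by rewrite -H addrCA subrr addr0.
Qed.

Lemma Rint_cst_itv {R : realType} (k t : R) : 0 <= t ->
  (\int[lebesgue_measure]_(x in `[0, t]) k = k * t)%R.
Proof.
move=> t0; rewrite Rintegral_cst // [X in fine X](lebesgue_measure_itv `[0, t]) /=.
case: ifPn; first by rewrite /= subr0.
rewrite lte_fin -leNgt => t0'; have -> : t = 0 by apply/le_anti; rewrite t0 t0'.
by rewrite mulr0.
Qed.

Lemma phiE {R : realType} (s x : R) : s != 0 ->
  phi s x = normal_peak s * expR (- x ^+ 2 / (s ^+ 2 *+ 2)).
Proof. by move=> s0; rewrite /phi normal_pdfE // /normal_fun subr0. Qed.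

Lemma phi_diff {R : realType} (s x d : R) : 0 < s -> 0 <= x -> 0 <= d ->
  normal_peak s * expR (- x ^+ 2 / (s ^+ 2 *+ 2)) * (1 - expR (- d ^+ 2 / (s ^+ 2 *+ 2)))
  <= phi s x - phi s (x + d).
Proof.
move=> s0 x0 d0; have sn0 : s != 0 by rewrite gt_eqF.
rewrite !phiE //.
have a0 : 0 < s ^+ 2 *+ 2 by rewrite pmulrn_rgt0 // exprn_gt0.
set a := s ^+ 2 *+ 2 in a0 *.
rewrite -mulrBr -mulrA; apply: ler_wpM2l; first exact: normal_peak_ge0.
rewrite mulrBr mulr1 lerD2l lerN2 -expRD ler_expR.
rewrite !mulNr -opprD lerN2 -mulrDl ler_pM2r ?invr_gt0 //.
rewrite sqrrD lerD2r -[X in X <= _]addr0 lerD2l.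
by rewrite mulrn_wge0 // mulr_ge0.
Qed.

Lemma cont_f {R : realType} (s d : R) : s != 0 ->
  continuous (fun x : R => phi s x - phi s (x + d)).
Proof.
move=> s0 x; apply: continuousB; first exact: phi_cont.
apply: continuous_comp; first by apply: continuousD => //; exact: cvg_cst.
exact: phi_cont.
Qed.

Lemma oneBexp_ge0 {R : realType} (y : R) : 0 <= y -> 0 <= 1 - expR (- y).
Proof. by move=> y0; rewrite subr_ge0 expR_le1 oppr_le0. Qed.

Lemma L4 {R : realType} (s w t d : R) : 0 < s -> 0 <= t -> t <= w -> t <= s -> 0 <= d ->
  t * (normal_peak s * expR (- 2^-1) * (1 - expR (- d ^+ 2 / (s ^+ 2 *+ 2))))
  <= (\int[lebesgue_measure]_(x in `[0, w]) (phi s x - phi s (x + d)))%R.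
Proof.
move=> s0 t0 tw ts d0; have sn0 : s != 0 by rewrite gt_eqF.
have a0 : 0 < s ^+ 2 *+ 2 by rewrite pmulrn_rgt0 // exprn_gt0.
have e0 : 0 <= 1 - expR (- d ^+ 2 / (s ^+ 2 *+ 2)).
  by rewrite mulNr oneBexp_ge0 // divr_ge0 ?sqr_ge0 ?ltW.
have intf : forall a b : R, lebesgue_measure.-integrable `[a, b]
     (EFin \o (fun x => phi s x - phi s (x + d))).
  move=> a b; apply: continuous_compact_integrable; first exact: segment_compact.
  by apply: continuous_subspaceT; exact: cont_f.
rewrite (@Rsplit R _ 0 t w (@cont_f R s d sn0)) //.
rewrite -[X in X <= _]addr0; apply: lerD; last first.
  apply: Rintegral_ge0 => x /=; rewrite in_itv /= => /andP[tx _].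
  apply: (le_trans _ (@phi_diff R s x d s0 (le_trans t0 tx) d0)).
  by rewrite mulr_ge0 // mulr_ge0 ?normal_peak_ge0 ?expR_ge0.
rewrite mulrC -Rint_cst_itv //; apply: le_Rintegral => //.
- apply: continuous_compact_integrable; first exact: segment_compact.
  by apply: continuous_subspaceT => x; exact: cvg_cst.
- move=> x /=; rewrite in_itv /= => /andP[x0 xt].
  apply: (le_trans _ (@phi_diff R s x d s0 x0 d0)).
  apply: ler_wpM2r => //; apply: ler_wpM2l; first exact: normal_peak_ge0.
  rewrite ler_expR mulNr lerN2 ler_pdivrMr //.
  have -> : 2^-1 * (s ^+ 2 *+ 2) = s ^+ 2 :> R.
    by rewrite -[s ^+ 2 *+ 2]mulr_natl mulrA mulVf ?mul1r ?pnatr_eq0.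
  by rewrite ler_sqr ?nnegrE ?(le_trans xt) // ltW.
Qed.

Lemma peak_lb {R : realType} (s : R) : 0 < s -> (3 * s)^-1 <= normal_peak s.
Proof.
move=> s0; rewrite /normal_peak lef_pV2 ?posrE ?mulr_gt0 //; last first.
  by rewrite sqrtr_gt0 pmulrn_rgt0 // mulr_gt0 ?exprn_gt0 ?pi_gt0.
rewrite -[X in _ <= X]ger0_norm ?mulr_ge0 ?ltW // -sqrtr_sqr ltr_sqrt ?exprn_gt0 ?mulr_gt0 //.
have := pihalf_lt2 R; have := pi_gt0 R => p0 p2.
have p4 : pi < 4 :> R by rewrite -[4]/(2 * 2)%:R natrM -ltr_pdivrMr.
rewrite mulr2n exprMn; nra.
Qed.

Lemma tpeak_lb {R : realType} (s Q w : R) : 0 < s -> s ^+ 2 <= Q -> 1 <= Q -> 0 < w ->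
  Num.min w 1 / (3 * Q) <= Num.min w s * normal_peak s.
Proof.
move=> s0 sQ Q1 w0.
have sQ' : s <= Q by nra.
have Q0 : 0 < Q by lra.
have pk := peak_lb s s0.
have m1 : Num.min w 1 <= 1 by rewrite ge_min lexx orbT.
have m2 : Num.min w 1 <= w by rewrite ge_min lexx.
have m0 : 0 <= Num.min w 1 by rewrite le_min (ltW w0) ler01.
have pk0 : 0 < (3 * s)^-1 by rewrite invr_gt0 mulr_gt0.
case: (leP w s) => ws.
- idtac.
  apply: le_trans (_ : w * (3 * s)^-1 <= _); last first.
    by apply: ler_wpM2l => //; exact: ltW.
  rewrite ler_pdivrMr ?mulr_gt0 // mulrAC -mulrA.
  apply: le_trans (_ : w * 1 <= _); first by rewrite mulr1.
  apply: ler_wpM2l; first exact: ltW.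
  by rewrite ler_pdivlMr ?mulr_gt0 // mul1r ler_pM2l.
- idtac.
  apply: le_trans (_ : s * (3 * s)^-1 <= _); last first.
    by apply: ler_wpM2l => //; exact: ltW.
  have -> : s / (3 * s) = 3^-1 by rewrite invfM mulrCA mulfV ?gt_eqF // mulr1.
  rewrite ler_pdivrMr ?mulr_gt0 //; apply: le_trans m1 _; lra.
Qed.

Lemma oneBexp_lb {R : realType} (u y : R) : 0 <= u -> u <= 1 -> u <= y ->
  u / 2 <= 1 - expR (- y).
Proof.
move=> u0 u1 uy.
have h1 : expR (- y) <= (1 + u)^-1.
  apply: le_trans (_ : expR (- u) <= _); first by rewrite ler_expR lerN2.
  by rewrite expRN lef_pV2 ?posrE ?expR_gt0 ?expR_ge1Dx //; lra.
set z := (1 + u)^-1 in h1.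
have hz : z * (1 + u) = 1 by rewrite mulVf //; apply/negP => /eqP; lra.
have z0 : 0 <= z by rewrite invr_ge0; lra.
have z2 : 1 <= 2 * z by nra.
nra.
Qed.

Lemma combine {R : realType} (s Q w d u : R) : 0 < s -> s ^+ 2 <= Q -> 1 <= Q -> 0 < w ->
  0 <= d -> 0 <= u -> u <= 1 -> u * (s ^+ 2 *+ 2) <= d ^+ 2 ->
  Num.min w 1 * u / (12 * Q) <= (\int[lebesgue_measure]_(x in `[0, w]) (phi s x - phi s (x + d)))%R.
Proof.
move=> s0 sQ Q1 w0 d0 u0 u1 ud.
have Q0 : 0 < Q by lra.
have a0 : 0 < s ^+ 2 *+ 2 by rewrite pmulrn_rgt0 // exprn_gt0.
have t0 : 0 <= Num.min w s by rewrite le_min !ltW.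
have tw : Num.min w s <= w by rewrite ge_min lexx.
have ts : Num.min w s <= s by rewrite ge_min lexx orbT.
have := @L4 R s w (Num.min w s) d s0 t0 tw ts d0.
apply: le_trans.
have B := @tpeak_lb R s Q w s0 sQ Q1 w0.
have C : 2^-1 <= expR (- 2^-1 : R).
  by apply: le_trans (expR_ge1Dx _); lra.
have D : u / 2 <= 1 - expR (- d ^+ 2 / (s ^+ 2 *+ 2)).
  rewrite mulNr; apply: oneBexp_lb => //.
  by rewrite ler_pdivlMr.
have m0 : 0 <= Num.min w 1 by rewrite le_min (ltW w0) ler01.
rewrite !mulrA; apply: le_trans (_ : Num.min w 1 / (3 * Q) * 2^-1 * (u / 2) <= _).
  by rewrite le_eqVlt; apply/orP; left; apply/eqP; field; rewrite gt_eqF.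
have A0 : 0 <= Num.min w 1 / (3 * Q) by rewrite divr_ge0 // mulr_ge0 //; lra.
apply: ler_pM => //.
- by rewrite mulr_ge0 // invr_ge0.
- by rewrite divr_ge0.
apply: ler_pM => //.
Qed.

Lemma numQ {R : realType} (k Q : R) : 0 <= k -> 1 <= Q ->
  24^-1 * k / Q ^+ 4 <= k / (24 * Q ^+ 2).
Proof.
move=> k0 Q1; have Q0 : 0 < Q by lra.
have -> : 24^-1 * k / Q ^+ 4 = k / (24 * Q ^+ 2) * (Q ^+ 2)^-1.
  by field; rewrite gt_eqF.
rewrite -[X in _ <= X]mulr1; apply: ler_wpM2l.
  by rewrite divr_ge0 // mulr_ge0 // exprn_ge0 // ltW.
by rewrite invf_le1 ?exprn_gt0 // expr_ge1 //; lra.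
Qed.

Lemma intB {R : realType} (s c w : R) : s != 0 ->
  (\int[lebesgue_measure]_(x in `[0, w]) (phi s x - phi s (x + c)) =
   II s 0 w - \int[lebesgue_measure]_(x in `[0, w]) phi s (x + c))%R.
Proof.
move=> s0; rewrite RintegralB //.
- exact: int_phi.
- apply: continuous_compact_integrable; first exact: segment_compact.
  apply: continuous_subspaceT => x.
  apply: (@continuous_comp _ _ _ (fun y => y + c) (phi s)).
    by apply: continuousD => //; exact: cvg_cst.
  exact: phi_cont.
Qed.

Lemma main_ineq {R : realType} (s Q r : R) : 0 < s -> s ^+ 2 <= Q -> 1 <= Q -> 0 <= r ->
  24^-1 * Num.min 1 ((1 - r) ^+ 2) / Q ^+ 4 <= `|II s 0 2 - II s (r - 1) (r + 1)|.
Proof.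
move=> s0 sQ Q1 r0; have sn0 : s != 0 by rewrite gt_eqF.
have Q0 : 0 < Q by lra.
have k0 : 0 <= Num.min 1 ((1 - r) ^+ 2) by rewrite le_min ler01 sqr_ge0.
have k1 : Num.min 1 ((1 - r) ^+ 2) <= 1 by rewrite ge_min lexx.
have kr : Num.min 1 ((1 - r) ^+ 2) <= (1 - r) ^+ 2 by rewrite ge_min lexx orbT.
apply: le_trans (@numQ R _ Q k0 Q1) _.
case: (ltP r 1) => r1.
- rewrite (@II_split R s (r - 1) 0 (r + 1)); [|lra|lra].
  rewrite (@II_split R s 0 (r + 1) 2); [|lra|lra].
  have -> : II s (r - 1) 0 = II s 0 (1 - r).
    by rewrite -(@II_refl R s 0 (1 - r)) ?oppr0 ?opprB //; lra.
  have -> : II s (r + 1) 2 = II s (0 + (r + 1)) ((1 - r) + (r + 1)).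
    by congr II; ring.
  rewrite II_shift //; last lra.
  have := @combine R s Q (1 - r) (r + 1) (2^-1 / Q) s0 sQ Q1.
  rewrite intB // => H.
  have u0 : 0 <= 2^-1 / Q :> R by rewrite divr_ge0 // ltW.
  have u1 : 2^-1 / Q <= 1 :> R by rewrite ler_pdivrMr // mul1r; lra.
  have su : 2^-1 / Q * (s ^+ 2 *+ 2) = s ^+ 2 / Q.
    by field; rewrite gt_eqF.
  have ud : 2^-1 / Q * (s ^+ 2 *+ 2) <= (r + 1) ^+ 2.
    rewrite su; apply: le_trans (_ : 1 <= _).
      by rewrite ler_pdivrMr // mul1r.
    nra.
  have {}H := H (ltac:(lra)) (ltac:(lra)) u0 u1 ud.
  have mr : Num.min (1 - r) 1 = 1 - r.
    by apply/le_anti; rewrite ge_min lexx le_min lexx /=; lra.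
  rewrite mr in H.
  set a := II s 0 (r + 1) in H *; set b := Rintegral _ _ _ in H *.
  set c := II s 0 (1 - r) in H *.
  have -> : a + b - (c + a) = - (c - b) by ring.
  rewrite normrN; apply: le_trans (_ : (1 - r) * (2^-1 / Q) / (12 * Q) <= _).
    have -> : (1 - r) * (2^-1 / Q) / (12 * Q) = (1 - r) / (24 * Q ^+ 2).
      by field; rewrite gt_eqF.
    apply: ler_wpM2r; first by rewrite invr_ge0 mulr_ge0 // exprn_ge0 // ltW.
    apply: le_trans kr _; nra.
  by apply: le_trans H _; exact: ler_norm.
- have -> : II s (r - 1) (r + 1) = II s (0 + (r - 1)) (2 + (r - 1)).
    by congr II; ring.
  rewrite II_shift //.
  set k := Num.min 1 ((1 - r) ^+ 2) in k0 k1 kr *.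
  have := @combine R s Q 2 (r - 1) (2^-1 * k / Q) s0 sQ Q1.
  rewrite intB // => H.
  have u0 : 0 <= 2^-1 * k / Q :> R by rewrite divr_ge0 ?mulr_ge0 // ltW.
  have u1 : 2^-1 * k / Q <= 1 :> R by rewrite ler_pdivrMr // mul1r; lra.
  have su : 2^-1 * k / Q * (s ^+ 2 *+ 2) = k * (s ^+ 2 / Q).
    by field; rewrite gt_eqF.
  have ud : 2^-1 * k / Q * (s ^+ 2 *+ 2) <= (r - 1) ^+ 2.
    rewrite su; apply: le_trans (_ : k * 1 <= _).
      apply: ler_wpM2l => //.
      by rewrite ler_pdivrMr // mul1r.
    by rewrite mulr1; apply: le_trans kr _; rewrite -sqrrN opprB.
  have {}H := H (ltac:(lra)) (ltac:(lra)) u0 u1 ud.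
  have mr : Num.min 2 1 = 1 :> R.
    by apply/le_anti; rewrite ge_min lexx orbT le_min lexx /=; lra.
  rewrite mr in H.
  have -> : k / (24 * Q ^+ 2) = 1 * (2^-1 * k / Q) / (12 * Q).
    by field; rewrite gt_eqF.
  by apply: le_trans H _; exact: ler_norm.
Qed.
Lemma quad_delta {R : realType} (d : nat) (S : 'M[R]_d) (i : 'I_d) :
  quad_form S (delta_mx i 0) = S i i.
Proof. by rewrite /quad_form trmx_delta -rowE -colE !mxE. Qed.

Lemma sum_delta {R : realType} (d : nat) (i : 'I_d) (f : 'I_d -> R) :
  \sum_(j < d) (delta_mx i 0 : 'cV[R]_d) j 0 * f j = f i.
Proof.
rewrite (bigD1 i) //= big1 ?addr0; first by rewrite mxE !eqxx mul1r.
by move=> j ji; rewrite mxE (negbTE ji) mul0r.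
Qed.

Lemma link {R : realType} (d : nat) (S : 'M[R]_d) (m : 'cV[R]_d)
    (dT : measure_display) (T : measurableType dT) (P : probability T R)
    (X : 'I_d -> T -> R) (i : 'I_d) :
  pos_def S -> gaussian_vector P X m S ->
  0 < Num.sqrt (S i i) /\
  prob_box P X i = II (Num.sqrt (S i i)) (`|m i 0| - 1) (`|m i 0| + 1).
Proof.
move=> [_ pS] [_ gX].
have a0 : (delta_mx i 0 : 'cV[R]_d) != 0.
  apply/negP => /eqP /matrixP /(_ i 0); rewrite !mxE !eqxx /= => /eqP.
  by rewrite oner_eq0.
have Sii : 0 < S i i by rewrite -quad_delta; exact: pS.
have s0 : 0 < Num.sqrt (S i i) by rewrite sqrtr_gt0.
split => //.
have := gX _ a0 `[-1, 1]%classic (measurable_itv _).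
rewrite sum_delta quad_delta.
have -> : (fun t => \sum_(j < d) (delta_mx i 0 : 'cV[R]_d) j 0 * X j t) = X i.
  by apply/funext => t; rewrite sum_delta.
rewrite /prob_box => ->.
set s := Num.sqrt (S i i); set mm := m i 0.
have sn0 : s != 0 by rewrite gt_eqF.
transitivity (\int[lebesgue_measure]_(x in `[-1, 1]) phi s (x + - mm))%R.
  rewrite /normal_prob /Rintegral; congr fine; apply: eq_integral => x _.
  by rewrite !phiE // normal_pdfE // /normal_fun.
rewrite -II_shift //.
case: (leP 0 mm) => m0.
- rewrite (ger0_norm m0) -(@II_refl R s (mm - 1) (mm + 1)) //; last lra.
  by congr II; ring.
- rewrite (ltr0_norm m0); congr II; ring.
Qed.

Theorem lemma5 (R : realType) :
  exists c : R, 0 < c /\ c <= 1 /\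
  forall (d : nat) (S : 'M[R]_d) (mustar mu : 'cV[R]_d) (Q : R)
    (dT1 : measure_display) (T1 : measurableType dT1) (P1 : probability T1 R)
    (X1 : 'I_d -> T1 -> R)
    (dT2 : measure_display) (T2 : measurableType dT2) (P2 : probability T2 R)
    (X2 : 'I_d -> T2 -> R),
  1 <= Q ->
  pos_def S ->
  gaussian_vector P1 X1 mustar S ->
  gaussian_vector P2 X2 mu S ->
  (forall i : 'I_d, S i i <= Q) ->
  (forall i : 'I_d, `|mustar i 0| = 1) ->
  forall i : 'I_d,
    c * Num.min 1 ((1 - `|mu i 0|) ^+ 2) / Q ^+ 4
      <= `|prob_box P1 X1 i - prob_box P2 X2 i|.
Proof.
exists 24^-1; split; first by rewrite invr_gt0.
split; first by rewrite invf_le1 // ler1n.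
move=> d S mustar mu Q dT1 T1 P1 X1 dT2 T2 P2 X2 Q1 pS g1 g2 SQ ms i.
have [s0 ->] := @link R d S mustar dT1 T1 P1 X1 i pS g1.
have [_ ->] := @link R d S mu dT2 T2 P2 X2 i pS g2.
rewrite ms subrr (_ : 1 + 1 = 2) //.
apply: main_ineq => //.
by rewrite sqr_sqrtr ?SQ // ltW // -sqrtr_gt0.
Qed.
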